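(* Every tree (in which every nontrivial pseudo-supremum is a supremum) that is normal in the interval topology is countably paracompact.
   Context: A tree is a partially ordered set in which the set of predecessors of each element is well-ordered. For a nonempty chain bounded above, its pseudo-supremum is the set of its minimal upper bounds; standing assumption: each such set is a singleton. The interval topology has as base all sets $(s,t]=\{x:s<x\le t\}$ together with all singletons $\{t\}$ with $t$ minimal. A space is countably paracompact if every countable open cover has a locally finite open refinement. *)

(* Defs.v *)
From Stdlib Require Import List.

Section Tree.
Context {T : Type} (le : T -> T -> Prop).

Definition lt (s t : T) : Prop := le s t /\ s <> t.

Definition is_partial_order : Prop :=
  (forall x, le x x) /\
  (forall x y, le x y -> le y x -> x = y) /\
  (forall x y z, le x y -> le y z -> le x z).

Definition well_ordered_set (S : T -> Prop) : Prop :=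
  (forall x y, S x -> S y -> le x y \/ le y x) /\
  (forall A : T -> Prop, (forall x, A x -> S x) -> (exists x, A x) ->
     exists m, A m /\ forall x, A x -> le m x).

Definition is_tree : Prop :=
  is_partial_order /\ forall t, well_ordered_set (fun s => lt s t).

Definition is_chain (C : T -> Prop) : Prop :=
  forall x y, C x -> C y -> le x y \/ le y x.

Definition upper_bound (C : T -> Prop) (u : T) : Prop := forall c, C c -> le c u.

Definition pseudo_supremum (C : T -> Prop) : T -> Prop :=
  fun u => upper_bound C u /\ forall v, upper_bound C v -> le v u -> v = u.

Definition pseudo_suprema_singletons : Prop :=
  forall C : T -> Prop, is_chain C -> (exists c, C c) ->
    (exists u, upper_bound C u) ->
    exists s, forall x, pseudo_supremum C x <-> x = s.

Definition minimal (t : T) : Prop := forall x, le x t -> x = t.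

Definition ioc (s t : T) : T -> Prop := fun x => lt s x /\ le x t.

Definition interval_base (B : T -> Prop) : Prop :=
  (exists s t, B = ioc s t) \/ (exists t, minimal t /\ B = (fun x => x = t)).

Definition interval_open (U : T -> Prop) : Prop :=
  forall x, U x -> exists B, interval_base B /\ B x /\ forall y, B y -> U y.

End Tree.

Section Topology.
Context {T : Type} (opn : (T -> Prop) -> Prop).

Definition closed_set (A : T -> Prop) : Prop := opn (fun x => ~ A x).

Definition normal_space : Prop :=
  forall A B : T -> Prop, closed_set A -> closed_set B ->
    (forall x, A x -> B x -> False) ->
    exists U V, opn U /\ opn V /\ (forall x, A x -> U x) /\
      (forall x, B x -> V x) /\ (forall x, U x -> V x -> False).

Definition meets (A B : T -> Prop) : Prop := exists x, A x /\ B x.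

Definition finite_family (F : (T -> Prop) -> Prop) : Prop :=
  exists l : list (T -> Prop), forall V, F V -> In V l.

Definition locally_finite (F : (T -> Prop) -> Prop) : Prop :=
  forall x, exists W, opn W /\ W x /\ finite_family (fun V => F V /\ meets V W).

Definition countably_paracompact : Prop :=
  forall U : nat -> (T -> Prop), (forall n, opn (U n)) ->
    (forall x, exists n, U n x) ->
    exists F : (T -> Prop) -> Prop,
      (forall V, F V -> opn V) /\
      (forall x, exists V, F V /\ V x) /\
      (forall V, F V -> exists n, forall x, V x -> U n x) /\
      locally_finite F.

End Topology.

(* Main.v *)
Require Import Defs.
From Stdlib Require Import List Lia Classical ClassicalEpsilon Arith.

Definition Wn {T} (U : nat -> T -> Prop) n (x : T) := exists m, m <= n /\ U m x.
Definition Hn {T} (le : T -> T -> Prop) U n x := forall y, le y x -> Wn U n y.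
Definition Jn {T} (le : T -> T -> Prop) U m x :=
  ~ minimal le x /\ ~ Hn le U m x /\ forall y, lt le y x -> Hn le U m y.

Lemma open_ext {T} (le : T -> T -> Prop) (A B : T -> Prop) :
  (forall x, A x <-> B x) -> interval_open le A -> interval_open le B.
Proof.
  intros hAB hA x Bx. destruct (hA x (proj2 (hAB x) Bx)) as [C [hC [Cx hCA]]].
  exists C; split; [|split]; auto. intros y Cy; apply hAB; auto.
Qed.

Lemma nonmin {T} (le : T -> T -> Prop) x : ~ minimal le x -> exists s, lt le s x.
Proof.
  intros h. apply NNPP; intros hn. apply h. intros y hy.
  apply NNPP; intros hne. apply hn. exists y. split; auto.
Qed.

Lemma opn_full {T} (le : T -> T -> Prop) : (forall x, le x x) -> interval_open le (fun _ => True).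
Proof.
  intros refl x _. destruct (classic (minimal le x)) as [hm|hm].
  - exists (fun y => y = x). split; [right; exists x; auto|split; auto].
  - destruct (nonmin le x hm) as [s hs]. exists (ioc le s x).
    split; [left; exists s, x; auto|split; [split; auto|auto]].
Qed.

Lemma lt_le_trans {T} (le : T -> T -> Prop) :
  is_partial_order le -> forall a b c, lt le a b -> le b c -> lt le a c.
Proof.
  intros [r [an tr]] a b c [h1 h2] h3. split; [eauto|].
  intros ->. apply h2. apply an; auto.
Qed.

Lemma le_lt_trans {T} (le : T -> T -> Prop) :
  is_partial_order le -> forall a b c, le a b -> lt le b c -> lt le a c.
Proof.
  intros [r [an tr]] a b c h1 [h2 h3]. split; [eauto|].
  intros ->. apply h3. apply an; auto.
Qed.

Lemma opn_inter2 {T} (le : T -> T -> Prop) : is_tree le ->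
  forall A B, interval_open le A -> interval_open le B ->
  interval_open le (fun x => A x /\ B x).
Proof.
  intros [po hw] A B hA hB x [Ax Bx].
  pose proof po as [r [an tr]].
  destruct (classic (minimal le x)) as [hm|hm].
  - destruct (hA x Ax) as [C1 [hC1 [C1x hC1A]]].
    destruct (hB x Bx) as [C2 [hC2 [C2x hC2B]]].
    exists (fun y => y = x). split; [right; exists x; auto|split; auto].
    intros y ->. auto.
  - destruct (hA x Ax) as [C1 [hC1 [C1x hC1A]]].
    destruct (hB x Bx) as [C2 [hC2 [C2x hC2B]]].
    destruct hC1 as [[s1 [t1 ->]]|[t1 [m1 ->]]]; [|subst; contradiction].
    destruct hC2 as [[s2 [t2 ->]]|[t2 [m2 ->]]]; [|subst; contradiction].
    destruct C1x as [l1 u1]. destruct C2x as [l2 u2].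
    destruct (proj1 (hw x) s1 s2 l1 l2) as [h|h].
    + exists (ioc le s2 x). split; [left; eauto|split; [split; auto|]].
      intros y [hy1 hy2]. split.
      * apply hC1A. split; [eapply le_lt_trans; eauto|eauto].
      * apply hC2B. split; eauto.
    + exists (ioc le s1 x). split; [left; eauto|split; [split; auto|]].
      intros y [hy1 hy2]. split.
      * apply hC1A. split; eauto.
      * apply hC2B. split; [eapply le_lt_trans; eauto|eauto].
Qed.

Lemma opn_fin_inter {T} (le : T -> T -> Prop) : is_tree le ->
  forall (O : nat -> T -> Prop), (forall m, interval_open le (O m)) ->
  forall n, interval_open le (fun x => forall m, m < n -> O m x).
Proof.
  intros ht O hO n. induction n.
  - eapply open_ext; [|apply (opn_full le); apply ht].
    intros x; split; intros; [lia|auto].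
  - eapply open_ext; [|apply (opn_inter2 le ht _ _ IHn (hO n))].
    intros x; split.
    + intros [h1 h2] m hm. destruct (Nat.eq_dec m n); [subst; auto|apply h1; lia].
    + intros h; split; auto.
Qed.
Lemma Wn_mono {T} (U : nat -> T -> Prop) n n' x : n <= n' -> Wn U n x -> Wn U n' x.
Proof. intros h [m [hm hu]]. exists m; split; auto; lia. Qed.

Lemma Hn_mono {T} le (U : nat -> T -> Prop) n n' x : n <= n' -> Hn le U n x -> Hn le U n' x.
Proof. intros h hx y hy. eapply Wn_mono; eauto. Qed.

Lemma Hn_down {T} (le : T -> T -> Prop) U n x y : is_partial_order le ->
  le y x -> Hn le U n x -> Hn le U n y.
Proof. intros [r [an tr]] hyx hx w hw. apply hx; eauto. Qed.

Lemma L1 {T} (le : T -> T -> Prop) (U : nat -> T -> Prop) : is_tree le ->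
  (forall n, interval_open le (U n)) -> (forall x, exists n, U n x) ->
  forall z, (forall y, lt le y z -> exists n, Hn le U n y) -> exists n, Hn le U n z.
Proof.
  intros [po hw] hU hc z hz. pose proof po as [r [an tr]].
  destruct (hc z) as [k hk].
  destruct (classic (minimal le z)) as [hm|hm].
  - exists k. intros y hy. rewrite (hm y hy). exists k; auto.
  - destruct (hU k z hk) as [B [hB [Bz hBU]]].
    destruct hB as [[s [t ->]]|[t [mt ->]]]; [|subst; contradiction].
    destruct Bz as [hsz hzt].
    destruct (hz s hsz) as [n1 hn1].
    exists (Nat.max k n1). intros y hy.
    destruct (classic (y = z)) as [->|hne].
    + exists k; split; [lia|]. apply hBU. split; auto.
    + assert (hyz : lt le y z) by (split; auto).
      destruct (proj1 (hw z) y s hyz hsz) as [h|h].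
      * eapply Wn_mono; [|apply hn1; auto]. lia.
      * destruct (classic (s = y)) as [<-|hsy].
        -- eapply Wn_mono; [|apply hn1; auto]. lia.
        -- exists k; split; [lia|]. apply hBU. split; [split; auto|eauto].
Qed.

Lemma claim1 {T} (le : T -> T -> Prop) (U : nat -> T -> Prop) : is_tree le ->
  (forall n, interval_open le (U n)) -> (forall x, exists n, U n x) ->
  forall x, exists n, Hn le U n x.
Proof.
  intros ht hU hc x. apply (L1 le U ht hU hc).
  destruct ht as [po hw]. pose proof po as [r [an tr]].
  apply NNPP; intros hn.
  destruct (proj2 (hw x) (fun y => lt le y x /\ forall n, ~ Hn le U n y)) as [a [[hax ha] hmin]].
  - intros y [h _]; auto.
  - apply not_all_ex_not in hn as [y hy].
    exists y. apply imply_to_and in hy as [h1 h2]. split; auto.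
    intros n hn'. apply h2. eauto.
  - destruct (L1 le U (conj po hw) hU hc a) as [n hn'].
    + intros y hya. apply NNPP; intros hne.
      assert (hyx : lt le y x) by (eapply lt_le_trans; eauto; apply hax).
      assert (le a y). { apply hmin. split; auto. intros n hn2. apply hne. eauto. }
      destruct hya as [h1 h2]. apply h2. apply an; auto.
    + apply (ha n hn').
Qed.

Lemma DJ {T} (le : T -> T -> Prop) (U : nat -> T -> Prop) : is_partial_order le ->
  forall k z, (forall y, lt le y z -> Hn le U k y) -> ~ minimal le z ->
  exists s, lt le s z /\ forall y m, lt le s y -> lt le y z -> ~ Jn le U m y.
Proof.
  intros po k. induction k; intros z hz hm.
  - destruct (nonmin le z hm) as [s hs]. exists s; split; auto.
    intros y m _ hyz [_ [hJ _]]. apply hJ. eapply Hn_mono; [|apply hz; eauto]. lia.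
  - destruct (classic (forall y, lt le y z -> Hn le U k y)) as [h|h].
    + apply IHk; auto.
    + apply not_all_ex_not in h as [y0 h]. apply imply_to_and in h as [hy0 hn0].
      exists y0; split; auto.
      intros y m hy0y hyz [_ [hJ hJb]].
      assert (hm0 : Hn le U m y0) by (apply hJb; auto).
      destruct (le_lt_dec m k) as [hmk|hmk].
      * apply hn0. eapply Hn_mono; [|exact hm0]. auto.
      * apply hJ. eapply Hn_mono; [|apply hz; eauto]. lia.
Qed.

Lemma closed_subJ {T} (le : T -> T -> Prop) (U : nat -> T -> Prop) : is_tree le ->
  (forall n, interval_open le (U n)) -> (forall x, exists n, U n x) ->
  forall S : T -> Prop, (forall x, S x -> exists m, Jn le U m x) ->
  closed_set (interval_open le) S.
Proof.
  intros ht hU hc S hS z hz. pose proof ht as [po hw].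
  destruct (classic (minimal le z)) as [hm|hm].
  - exists (fun y => y = z). split; [right; exists z; auto|split; auto].
    intros y ->; auto.
  - destruct (claim1 le U ht hU hc z) as [k hk].
    destruct (DJ le U po k z) as [s [hs hsJ]]; auto.
    + intros y hy. eapply Hn_down; eauto. apply hy.
    + exists (ioc le s z). split; [left; eauto|split].
      * split; auto. apply po.
      * intros y [hy1 hy2] hSy. destruct (classic (y = z)) as [->|hne]; [auto|].
        destruct (hS y hSy) as [m hm']. eapply hsJ; eauto. split; auto.
Qed.
Lemma choice_nat {A} (P : nat -> A -> Prop) : (forall n, exists a, P n a) -> exists g, forall n, P n (g n).
Proof.
  intros h. exists (fun n => proj1_sig (constructive_indefinite_description _ (h n))).
  intros n. exact (proj2_sig (constructive_indefinite_description _ (h n))).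
Qed.

Lemma least_nat (P : nat -> Prop) : (exists n, P n) -> exists n, P n /\ forall m, m < n -> ~ P m.
Proof.
  intros [n hn]. apply NNPP; intros hno.
  assert (forall k, forall m, m <= k -> ~ P m).
  { induction k; intros m hm hp.
    - apply hno. exists m; split; auto. intros; lia.
    - destruct (Nat.eq_dec m (S k)) as [->|hne]; [|apply (IHk m); auto; lia].
      apply hno. exists (S k); split; auto. intros m' hm'. apply IHk; lia. }
  apply (H n n); auto.
Qed.

Theorem corollary4p21 (T : Type) (le : T -> T -> Prop) :
  is_tree le -> pseudo_suprema_singletons le ->
  normal_space (interval_open le) ->
  countably_paracompact (interval_open le).
Proof.
  intros ht _ hnorm U hU hc. pose proof ht as [po hw]. pose proof po as [r [an tr]].
  set (C := fun n x => exists m, n <= m /\ Jn le U m x).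
  set (D := fun x => exists m, Jn le U m x).
  set (E := fun n x => D x /\ ~ C n x).
  assert (step1 : forall n, exists p : (T -> Prop) * (T -> Prop),
    interval_open le (fst p) /\ interval_open le (snd p) /\ (forall x, C n x -> fst p x) /\
    (forall x, E n x -> snd p x) /\ (forall x, fst p x -> snd p x -> False)).
  { intros n. destruct (hnorm (C n) (E n)) as [O [V [h1 [h2 [h3 [h4 h5]]]]]].
    - apply (closed_subJ le U ht hU hc). intros x [m [_ hm]]; eauto.
    - apply (closed_subJ le U ht hU hc). intros x [[m hm] _]; eauto.
    - intros x hC [_ hC']; auto.
    - exists (O, V); simpl; auto. }
  destruct (choice_nat _ step1) as [g1 hg1].
  set (O := fun n => fst (g1 n)). set (V := fun n => snd (g1 n)).
  set (Z := fun x => forall n, ~ V n x).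
  assert (hD : closed_set (interval_open le) D).
  { apply (closed_subJ le U ht hU hc). auto. }
  assert (hZ : closed_set (interval_open le) Z).
  { intros x hx. apply not_all_ex_not in hx as [n hn]. apply NNPP in hn.
    destruct (proj1 (proj2 (hg1 n)) x hn) as [B [hB [Bx hBV]]].
    exists B; split; [|split]; auto. intros y hy hZy. apply (hZy n). apply hBV; auto. }
  assert (hDZ : forall x, D x -> Z x -> False).
  { intros x hDx hZx. destruct (claim1 le U ht hU hc x) as [k hk].
    apply (hZx k). apply (hg1 k). split; auto.
    intros [m [hkm [_ [hJ _]]]]. apply hJ. eapply Hn_mono; eauto. }
  destruct (hnorm D Z hD hZ hDZ) as [U0 [U1 [hU0 [hU1 [hDU0 [hZU1 hU01]]]]]].
  set (G := fun n x => (forall m, m < S n -> O m x) /\ U0 x).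
  assert (hG : forall n, interval_open le (G n)).
  { intros n. apply (opn_inter2 le ht); auto. apply (opn_fin_inter le ht).
    intros m. apply (hg1 m). }
  assert (hcov : forall x, exists n, Hn le U n x /\ ~ G n x).
  { intros x. destruct (claim1 le U ht hU hc x) as [n0 hn0].
    destruct (classic (U0 x)) as [hx|hx].
    - assert (hnz : ~ Z x) by (intros hz; eapply hU01; eauto).
      apply not_all_ex_not in hnz as [k hk]. apply NNPP in hk.
      exists (Nat.max n0 k). split; [eapply Hn_mono; [|eauto]; lia|].
      intros [hO _]. apply (proj2 (proj2 (proj2 (proj2 (hg1 k)))) x); auto.
      apply hO. lia.
    - exists n0. split; auto. intros [_ h]; auto. }
  set (K := fun n x => Hn le U n x /\ ~ G n x).
  assert (hK : forall n, closed_set (interval_open le) (K n)).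
  { intros n z hz. destruct (classic (G n z)) as [hGz|hGz].
    - destruct (hG n z hGz) as [B [hB [Bz hBG]]]. exists B; split; [|split]; auto.
      intros y hy [_ hy']. apply hy'. auto.
    - assert (hHz : ~ Hn le U n z) by (intros h; apply hz; split; auto).
      destruct (classic (exists y, lt le y z /\ ~ Hn le U n y)) as [[y [hyz hy]]|hno].
      + exists (ioc le y z). split; [left; eauto|split; [split; auto|]].
        intros w [hw1 hw2] [hw3 _]. apply hy. exact (Hn_down le U n w y po (proj1 hw1) hw3).
      + destruct (classic (minimal le z)) as [hm|hm].
        * exists (fun y => y = z). split; [right; exists z; auto|split; auto].
          intros y -> ; auto.
        * exfalso. apply hGz.
          assert (hJ : Jn le U n z).
          { split; auto. split; auto. intros y hy. apply NNPP; intros hy'. apply hno; eauto. }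
          split.
          -- intros m hm'. apply (hg1 m). exists n; split; [lia|auto].
          -- apply hDU0. exists n; auto. }
  assert (hW : forall n, interval_open le (Wn U n)).
  { intros n x [m [hm hx]]. destruct (hU m x hx) as [B [hB [Bx hBU]]].
    exists B; split; [|split]; auto. intros y hy. exists m; auto. }
  assert (step2 : forall n, exists p : (T -> Prop) * (T -> Prop),
    interval_open le (fst p) /\ interval_open le (snd p) /\ (forall x, K n x -> fst p x) /\
    (forall x, ~ Wn U n x -> snd p x) /\ (forall x, fst p x -> snd p x -> False)).
  { intros n. destruct (hnorm (K n) (fun x => ~ Wn U n x)) as [P [Q [h1 [h2 [h3 [h4 h5]]]]]].
    - auto.
    - eapply open_ext; [|apply (hW n)]. intros x; split; [auto|apply NNPP].
    - intros x [hx _] hw'. apply hw'. apply hx. apply r.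
    - exists (P, Q); simpl; auto. }
  destruct (choice_nat _ step2) as [g2 hg2].
  set (P := fun n => fst (g2 n)). set (Q := fun n => snd (g2 n)).
  set (R := fun n x => U n x /\ forall m, m < n -> Q m x).
  exists (fun W => exists n, W = R n). split; [|split; [|split]].
  - intros W0 [n ->]. apply (opn_inter2 le ht); auto.
    apply (opn_fin_inter le ht). intros m; apply (hg2 m).
  - intros x. destruct (least_nat (fun n => U n x) (hc x)) as [n [hn hmin]].
    exists (R n). split; [eauto|]. split; auto.
    intros m hm. apply (hg2 m). intros [j [hj hu]]. apply (hmin j); auto. lia.
  - intros W0 [n ->]. exists n. intros x [hx _]; auto.
  - intros x. destruct (hcov x) as [k hk].
    exists (P k). split; [apply (hg2 k)|split; [apply (hg2 k); exact hk|]].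
    exists (map R (seq 0 (S k))). intros W0 [[n ->] [y [[hy1 hy2] hy3]]].
    apply in_map. apply in_seq.
    destruct (le_lt_dec n k) as [h|h]; [lia|].
    exfalso. apply (proj2 (proj2 (proj2 (proj2 (hg2 k)))) y); [exact hy3|apply hy2; lia].
Qed.
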